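(* Let $V$ and $H$ be real Hilbert spaces with scalar products $(\cdot,\cdot)_V$, $(\cdot,\cdot)_H$ and norms $\|\cdot\|_V$, $\|\cdot\|_H$, and let $\gamma:V\to H$ be a continuous, linear and compact operator. Let $\lambda_i$, $i=1,2,\dots$, be the eigenvalues of the problem: find $\lambda\in\mathbb{R}$, $u\in V$, $u\ne0$, with $(u,v)_V=\lambda(\gamma u,\gamma v)_H$ for all $v\in V$. Let $u_*\in V$ and $\lambda_*\in\mathbb{R}$ be arbitrary and let $w\in V$ satisfy $$(w,v)_V=(u_*,v)_V-\lambda_*(\gamma u_*,\gamma v)_H\quad\forall v\in V.$$ If $\gamma u_*\neq0$, then $$\min_i\left|\frac{\lambda_i-\lambda_*}{\lambda_i}\right|\le\frac{\|\gamma w\|_H}{\|\gamma u_*\|_H}.$$ *)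

(* Defs.v *)
From HB Require Import structures.
From mathcomp Require Import all_boot all_order all_algebra.
From mathcomp Require Import reals.
Set Implicit Arguments. Unset Strict Implicit. Unset Printing Implicit Defensive.
Import Order.TTheory GRing.Theory Num.Theory.
Local Open Scope ring_scope.

Section Hilbert.
Variables (R : realType) (V : lmodType R).

Definition is_inner_product (ip : V -> V -> R) : Prop :=
  [/\ (forall u v, ip u v = ip v u),
      (forall (a : R) u v w, ip (a *: u + v) w = a * ip u w + ip v w),
      (forall u, 0 <= ip u u) &
      (forall u, ip u u = 0 -> u = 0)].

Definition ipnorm (ip : V -> V -> R) (v : V) : R := Num.sqrt (ip v v).

Definition ip_complete (ip : V -> V -> R) : Prop :=
  forall u : nat -> V,
    (forall e : R, 0 < e -> exists N : nat, forall m n : nat,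
        (N <= m)%N -> (N <= n)%N -> ipnorm ip (u m - u n) < e) ->
    exists l : V, forall e : R, 0 < e -> exists N : nat, forall n : nat,
        (N <= n)%N -> ipnorm ip (u n - l) < e.

Definition is_hilbert (ip : V -> V -> R) : Prop :=
  is_inner_product ip /\ ip_complete ip.
End Hilbert.

Section Operators.
Variables (R : realType) (V H : lmodType R).
Variables (ipV : V -> V -> R) (ipH : H -> H -> R).

Definition op_continuous (f : V -> H) : Prop :=
  forall (x : V) (e : R), 0 < e -> exists d : R, 0 < d /\
    forall y : V, ipnorm ipV (y - x) < d -> ipnorm ipH (f y - f x) < e.

Definition op_compact (f : V -> H) : Prop :=
  forall u : nat -> V, (exists M : R, forall n, ipnorm ipV (u n) <= M) ->
    exists phi : nat -> nat, (forall n, (phi n < phi n.+1)%N) /\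
      exists l : H, forall e : R, 0 < e -> exists N : nat, forall n : nat,
        (N <= n)%N -> ipnorm ipH (f (u (phi n)) - l) < e.

Definition is_eigenvalue (g : V -> H) (lam : R) : Prop :=
  exists u : V, u <> 0 /\ forall v : V, ipV u v = lam * ipH (g u) (g v).
End Operators.

(* Main.v *)
Require Import Defs.
From HB Require Import structures.
From mathcomp Require Import all_boot all_order all_algebra.
From mathcomp Require Import classical_sets reals.
From mathcomp Require Import ring lra.
From Stdlib Require Import ClassicalEpsilon Classical.
Import Order.TTheory GRing.Theory Num.Theory.
Local Open Scope ring_scope.
Set Implicit Arguments. Unset Strict Implicit.

Section Real.
Variable R : realType.

Lemma rcs (A B C : R) : 0 <= C ->
  (forall t : R, 0 <= A + 2 * t * B + t ^+ 2 * C) -> B ^+ 2 <= A * C.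
Proof.
move=> C0 H.
have A0 : 0 <= A by have := H 0; lra.
have [Cz|Cp] := eqVneq C 0.
  subst C; rewrite mulr0.
  have [Bz|Bn] := eqVneq B 0; first by rewrite Bz expr0n.
  have := H (- (A + 1) / (2 * B)).
  have -> : 2 * (- (A + 1) / (2 * B)) * B = - (A + 1) by field.
  rewrite mulr0 addr0. lra.
have Cpos : 0 < C by rewrite lt_neqAle eq_sym Cp C0.
have := H (- B / C).
have -> : A + 2 * (- B / C) * B + (- B / C) ^+ 2 * C = A - B ^+ 2 / C by field.
rewrite subr_ge0 ler_pdivrMr //.
Qed.

Lemma quad0 (B C : R) : 0 <= C -> (forall t : R, 0 <= 2 * t * B + t ^+ 2 * C) -> B = 0.
Proof.
move=> C0 H; have := @rcs 0 B C C0 (fun t => ltac:(rewrite add0r; exact: H t)).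
rewrite mul0r => HB; apply/eqP; rewrite -sqrf_eq0 eq_le HB sqr_ge0 //.
Qed.

Lemma sq_lt (x y : R) : 0 <= y -> x ^+ 2 < y ^+ 2 -> - y < x < y.
Proof.
move=> y0 h; apply/andP; split; rewrite ltNge; apply/negP => h2; nra.
Qed.

Lemma ge0_eps (x : R) : (forall e : R, 0 < e -> - e <= x) -> 0 <= x.
Proof.
move=> H; rewrite leNgt; apply/negP => x0.
have := H (- x / 2); rewrite divr_gt0 // ?oppr_gt0 //; move/(_ isT). lra.
Qed.

Lemma le_eps (x y : R) : (forall e : R, 0 < e -> x <= y + e) -> x <= y.
Proof.
move=> H; rewrite -subr_ge0; apply: ge0_eps => e e0; have := H e e0; lra.
Qed.

Lemma archi_inv (e : R) : 0 < e -> exists N : nat, forall n, (N <= n)%N -> n.+1%:R^-1 < e.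
Proof.
move=> e0; exists (Num.truncn e^-1) => n Nn.
have h := truncnS_gt e^-1.
have h2 : (Num.truncn e^-1).+1%:R <= n.+1%:R :> R by rewrite ler_nat ltnS.
have h3 : e^-1 < n.+1%:R by exact: lt_le_trans h h2.
rewrite -(invrK e) ltf_pV2 ?posrE ?invr_gt0 //.
Qed.

Lemma approx_min (T : Type) (P : T -> Prop) (f : T -> R) (B : R) :
  (exists v, P v) -> (forall v, P v -> B <= f v) ->
  exists m : R, (forall v, P v -> m <= f v) /\
    exists s : nat -> T, forall n, P (s n) /\ f (s n) < m + n.+1%:R^-1.
Proof.
move=> [v0 Pv0] HB.
pose E : set R := fun r => exists v, P v /\ f v = r.
have hinf : has_inf E.
  split; first by exists (f v0), v0.
  by exists B => r [v [Pv <-]]; exact: HB.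
exists (inf E); split.
  by move=> v Pv; apply: (ge_inf hinf.2); exists v.
have H : forall n : nat, exists v, P v /\ f v < inf E + n.+1%:R^-1.
  move=> n; have h0 : 0 < n.+1%:R^-1 :> R by rewrite invr_gt0 ltr0Sn.
  have [r [v [Pv <-]] hr] := inf_adherent h0 hinf.
  by exists v.
exists (fun n => proj1_sig (constructive_indefinite_description _ (H n))).
by move=> n; case: (constructive_indefinite_description _ _).
Qed.
End Real.

Section Forms.
Variables (R : realType) (V : lmodType R).

Definition bilsym (f : V -> V -> R) :=
  (forall u v, f u v = f v u) /\
  (forall (a : R) u v w, f (a *: u + v) w = a * f u w + f v w).

Variable f : V -> V -> R.
Hypothesis hf : bilsym f.

Lemma fC u v : f u v = f v u. Proof. exact: hf.1. Qed.
Lemma f0 w : f 0 w = 0.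
Proof.
have := hf.2 1 0 0 w; rewrite scaler0 addr0 mul1r => h.
have : f 0 w + f 0 w = f 0 w + 0 by rewrite -h addr0.
by move/addrI.
Qed.
Lemma fD u v w : f (u + v) w = f u w + f v w.
Proof. by have := hf.2 1 u v w; rewrite scale1r mul1r. Qed.
Lemma fZ a u w : f (a *: u) w = a * f u w.
Proof. by have := hf.2 a u 0 w; rewrite addr0 f0 addr0. Qed.
Lemma fN u w : f (- u) w = - f u w.
Proof. by rewrite -scaleN1r fZ mulN1r. Qed.
Lemma fB u v w : f (u - v) w = f u w - f v w.
Proof. by rewrite fD fN. Qed.
Lemma f0r w : f w 0 = 0. Proof. by rewrite fC f0. Qed.
Lemma fDr u v w : f w (u + v) = f w u + f w v.
Proof. by rewrite fC fD fC (fC v). Qed.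
Lemma fZr a u w : f w (a *: u) = a * f w u.
Proof. by rewrite fC fZ fC. Qed.
Lemma fNr u w : f w (- u) = - f w u.
Proof. by rewrite fC fN fC. Qed.
Lemma fBr u v w : f w (u - v) = f w u - f w v.
Proof. by rewrite fDr fNr. Qed.

Lemma fsym_sub a b : f (a - b) (a - b) = f (b - a) (b - a).
Proof. by rewrite -opprB fN fNr opprK. Qed.

Lemma fexp x y t : f (x + t *: y) (x + t *: y) = f x x + 2 * t * f x y + t ^+ 2 * f y y.
Proof. rewrite !fD !fDr !fZ !fZr (fC y x); ring. Qed.

Lemma fpar x y : f (x + y) (x + y) + f (x - y) (x - y) = 2 * f x x + 2 * f y y.
Proof. rewrite !fD !fDr !fN !fNr (fC y x); ring. Qed.

Lemma fsub2 x y : f (x - y) (x - y) = f x x - 2 * f x y + f y y.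
Proof. rewrite !fB !fBr (fC y x); ring. Qed.

Lemma fCS x y : (forall z, 0 <= f z z) -> f x y ^+ 2 <= f x x * f y y.
Proof.
move=> pos; apply: rcs; first exact: pos.
by move=> t; rewrite -fexp.
Qed.

End Forms.

Lemma ip_bilsym (R : realType) (V : lmodType R) (ip : V -> V -> R) :
  is_inner_product ip -> bilsym ip.
Proof. by case=> h1 h2 _ _; split. Qed.

Lemma sqrt_lt (R : realType) (x e : R) : 0 < e -> (Num.sqrt x < e) = (x < e ^+ 2).
Proof.
move=> e0; rewrite -[RHS]ltr_sqrt ?exprn_gt0 // sqrtr_sqr ger0_norm // ltW //.
Qed.

Section IP.
Variables (R : realType) (V : lmodType R) (ip : V -> V -> R).
Hypothesis hip : is_inner_product ip.

Let hb := ip_bilsym hip.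

Lemma ip_ge0 x : 0 <= ip x x. Proof. by case: hip. Qed.
Lemma ip_eq0 x : ip x x = 0 -> x = 0. Proof. by case: hip => _ _ _; apply. Qed.

Lemma ip_ext x z : (forall y, ip x y = ip z y) -> x = z.
Proof.
move=> H; apply/eqP; rewrite -subr_eq0; apply/eqP; apply: ip_eq0.
by rewrite (fB hb) H subrr.
Qed.

Lemma tri2 a b c : ip (a - b) (a - b) <= 2 * ip (a - c) (a - c) + 2 * ip (c - b) (c - b).
Proof.
have := fpar hb (a - c) (c - b).
have -> : a - c + (c - b) = a - b by rewrite addrA subrK.
have := ip_ge0 (a - c - (c - b)). lra.
Qed.

Lemma ip_CS x y : ip x y ^+ 2 <= ip x x * ip y y.
Proof. by apply: (fCS hb); exact: ip_ge0. Qed.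

Definition cvgV (u : nat -> V) (l : V) := forall e : R, 0 < e ->
  exists N : nat, forall n, (N <= n)%N -> ip (u n - l) (u n - l) < e.

Lemma complete2 (u : nat -> V) : ip_complete ip ->
  (forall e : R, 0 < e -> exists N : nat, forall m n, (N <= m)%N -> (N <= n)%N ->
     ip (u m - u n) (u m - u n) < e) -> exists l, cvgV u l.
Proof.
move=> hc H.
have [l hl] : exists l : V, forall e : R, 0 < e -> exists N : nat, forall n : nat,
        (N <= n)%N -> ipnorm ip (u n - l) < e.
  apply: hc => e e0; have [N HN] := H (e ^+ 2) (exprn_gt0 _ e0).
  by exists N => m n Nm Nn; rewrite /ipnorm sqrt_lt // HN.
exists l => e e0.
have se : 0 < Num.sqrt e by rewrite sqrtr_gt0.
have [N HN] := hl (Num.sqrt e) se.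
by exists N => n Nn; have := HN n Nn; rewrite /ipnorm ltr_sqrt.
Qed.

End IP.

Section Lim.
Variable R : realType.
Definition cvgR (g : nat -> R) (G : R) := forall e : R, 0 < e ->
  exists N : nat, forall n, (N <= n)%N -> `|g n - G| < e.

Lemma aux_ab (a b e : R) : 4 * (a * b) + 4 * b < e -> 0 <= b -> 2 * (a * b) <= e / 2.
Proof. move=> h1 h2; lra. Qed.

Lemma lim_pass (g : nat -> R) (G t K : R) : cvgR g G ->
  (forall n, - n.+1%:R^-1 < 2 * t * g n + K) -> 0 <= 2 * t * G + K.
Proof.
move=> hg H; apply: ge0_eps => e e0.
have e2 : 0 < e / 2 by rewrite divr_gt0.
have [N1 HN1] := archi_inv e2.
have ta : 0 < 4 * (`|t| + 1) by rewrite mulr_gt0 // ltr_pwDr.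
have e3 : 0 < e / (4 * (`|t| + 1)) by rewrite divr_gt0.
have [N2 HN2] := hg _ e3.
pose n := maxn N1 N2.
have h1 := HN1 n (leq_maxl _ _).
have h2 := HN2 n (leq_maxr _ _).
have h3 := H n.
have h4 : `|2 * t * (g n - G)| <= e / 2.
  rewrite !normrM ger0_norm //.
  have hb : `|g n - G| * (4 * (`|t| + 1)) < e by rewrite -ltr_pdivlMr.
  have h5 : `|g n - G| * (4 * (`|t| + 1)) = 4 * (`|t| * `|g n - G|) + 4 * `|g n - G| by ring.
  rewrite h5 in hb; rewrite -mulrA.
  have := normr_ge0 (g n - G); move=> hge; exact: (aux_ab hb hge).
move: h4; rewrite ler_norml => /andP[h6 h7].
have h8 : 2 * t * (g n - G) = 2 * t * g n - 2 * t * G by ring.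
rewrite h8 in h6 h7; move: h1 h3 h6 h7; clear; move: (n.+1%:R^-1) => q; lra.
Qed.
End Lim.

Section Riesz.
Variables (R : realType) (V : lmodType R) (ip : V -> V -> R).
Hypothesis hip : is_inner_product ip.
Let hb := ip_bilsym hip.

Lemma ip_small y (e : R) : 0 < e -> exists2 d : R, 0 < d &
  forall x, ip x x < d -> `|ip x y| < e.
Proof.
move=> e0; have y0 := ip_ge0 hip y.
exists (e ^+ 2 / (ip y y + 1)); first by rewrite divr_gt0 ?exprn_gt0 // ltr_pwDr.
move=> x hx; have cs := ip_CS hip x y; have x0 := ip_ge0 hip x.
have hx' : ip x x * (ip y y + 1) < e ^+ 2 by rewrite -ltr_pdivlMr // ltr_pwDr.
have : ip x y ^+ 2 < e ^+ 2 by nra.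
rewrite -real_normK ?num_real // => h.
have hn := normr_ge0 (ip x y); move: h hn; move: `|ip x y| => c; clear -e0; nra.
Qed.

Lemma ip_cvg_r (s : nat -> V) k y : cvgV ip s k -> cvgR (fun n => ip (s n) y) (ip k y).
Proof.
move=> hs e e0; have [d d0 Hd] := ip_small y e0.
have [N HN] := hs d d0; exists N => n Nn.
by rewrite -(fB hb); apply: Hd; apply: HN.
Qed.

Variable F : V -> R.
Hypothesis hF : forall (a : R) u v, F (a *: u + v) = a * F u + F v.

Lemma F0 : F 0 = 0.
Proof.
have := hF 1 0 0; rewrite scaler0 addr0 mul1r => h.
have : F 0 + F 0 = F 0 + 0 by rewrite -h addr0.
by move/addrI.
Qed.
Lemma FD u v : F (u + v) = F u + F v.
Proof. by have := hF 1 u v; rewrite scale1r mul1r. Qed.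
Lemma FZ a u : F (a *: u) = a * F u.
Proof. by have := hF a u 0; rewrite addr0 F0 addr0. Qed.

Lemma riesz (C : R) : ip_complete ip -> (forall v, F v ^+ 2 <= C * ip v v) ->
  exists k, forall v, ip k v = F v.
Proof.
move=> hc hC.
pose J v := ip v v - 2 * F v.
have Jb : forall v, True -> - `|C| <= J v.
  move=> v _; rewrite /J; have := hC v; have := ip_ge0 hip v.
  have := ler_norm C; have := normr_ge0 C.
  move: (`|C|) (F v) (ip v v) => c a x h1 h2 h3 h4.
  have h5 : a ^+ 2 <= c * x by apply: (le_trans h4); nra.
  have := sqr_ge0 (x - c); have := sqr_ge0 (x + c - 2 * a). nra.
have [m [Hm [s Hs]]] := @approx_min _ V (fun v : V => True) J _ (ex_intro _ 0 I) Jb.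
have Jpar : forall x y, ip (x - y) (x - y) = 2 * (J x + J y - 2 * J (2^-1 *: (x + y))).
  move=> x y; rewrite /J FZ FD (fZ hb) (fZr hb).
  have := fpar hb x y; set P := ip (x + y) (x + y); set Q := ip (x - y) (x - y).
  move=> h; lra.
have cauchy : forall e : R, 0 < e -> exists N : nat, forall m n, (N <= m)%N -> (N <= n)%N ->
     ip (s m - s n) (s m - s n) < e.
  move=> e e0; have e4 : 0 < e / 4 by rewrite divr_gt0.
  have [N HN] := archi_inv e4.
  exists N => a b Na Nb; rewrite Jpar.
  have := (Hs a).2; have := (Hs b).2; have := Hm (2^-1 *: (s a + s b)) I.
  have := HN a Na; have := HN b Nb.
  move: (a.+1%:R^-1) (b.+1%:R^-1) => qa qb; lra.
have [k hk] := complete2 hc cauchy.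
exists k => y; apply/eqP; rewrite -subr_eq0; apply/eqP.
apply: (@quad0 _ _ (ip y y)); first exact: ip_ge0.
move=> t.
have := @lim_pass _ (fun n => ip (s n) y - F y) (ip k y - F y) t (t ^+ 2 * ip y y).
apply.
  move=> e e0; have [N HN] := ip_cvg_r y hk e0; exists N => n Nn.
  have -> : ip (s n) y - F y - (ip k y - F y) = ip (s n) y - ip k y by ring.
  exact: HN n Nn.
move=> n; have h1 := Hm (s n + t *: y) I; have h2 := (Hs n).2.
move: h1; rewrite /J (fexp hb) FD FZ => h1.
rewrite /J in h2; move: h1 h2; move: (n.+1%:R^-1) => q h1 h2; lra.
Qed.
End Riesz.

Lemma incr_ge (p : nat -> nat) : (forall n, (p n < p n.+1)%N) -> forall n, (n <= p n)%N.
Proof. move=> hp; elim=> [|n IH] //; exact: leq_ltn_trans IH (hp n). Qed.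

Lemma inv_mono (R : realType) (a b : nat) : (a <= b)%N -> b.+1%:R^-1 <= a.+1%:R^-1 :> R.
Proof. by move=> ab; rewrite lef_pV2 ?posrE ?ltr0Sn // ler_nat ltnS. Qed.

Section Forms2.
Variables (R : realType) (V : lmodType R).

Lemma fCS' (f : V -> V -> R) (hf : bilsym f) x y :
  0 <= f y y -> (forall t, 0 <= f (x + t *: y) (x + t *: y)) -> f x y ^+ 2 <= f x x * f y y.
Proof. move=> y0 H; apply: rcs => // t; by rewrite -(fexp hf). Qed.

Lemma bilsym_comb (f g : V -> V -> R) (a : R) : bilsym f -> bilsym g ->
  bilsym (fun x y => f x y + a * g x y).
Proof.
move=> hf hg; split=> [u v|b u v w]; first by rewrite (fC hf) (fC hg).
rewrite (fD hf) (fD hg) (fZ hf) (fZ hg); ring.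
Qed.

Variable ip : V -> V -> R.
Hypothesis hip : is_inner_product ip.

Lemma form_small (g : V -> R) (K : R) : (forall x, g x ^+ 2 <= K * ip x x) ->
  forall e : R, 0 < e -> exists2 d : R, 0 < d & forall x, ip x x < d -> `|g x| < e.
Proof.
move=> hK e e0.
exists (e ^+ 2 / (`|K| + 1)); first by rewrite divr_gt0 ?exprn_gt0 // ltr_pwDr.
move=> x hx; have x0 := ip_ge0 hip x; have := hK x.
have hK1 := ler_norm K; have hK2 := normr_ge0 K.
have hx' : ip x x * (`|K| + 1) < e ^+ 2 by rewrite -ltr_pdivlMr // ltr_pwDr.
have hn := normr_ge0 (g x); rewrite -[g x ^+ 2]real_normK ?num_real //.
move: hK1 hK2 hx' hn; move: (`|K|) (`|g x|) (ip x x) x0 => k c X.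
clear -e0; nra.
Qed.

Lemma normalize (f : V -> V -> R) (hf : bilsym f) x : 0 < ip x x ->
  let c := (Num.sqrt (ip x x))^-1 in
  ip (c *: x) (c *: x) = 1 /\ f (c *: x) (c *: x) = f x x / ip x x.
Proof.
move=> x0 c; have hb := ip_bilsym hip.
have c2 : c ^+ 2 = (ip x x)^-1 by rewrite /c exprVn sqr_sqrtr // ltW.
have e1 : forall g : V -> V -> R, bilsym g -> g (c *: x) (c *: x) = c ^+ 2 * g x x.
  by move=> g hg; rewrite (fZ hg) (fZr hg) mulrA expr2.
rewrite !e1 // c2; split; last by rewrite mulrC.
by rewrite mulVf // gt_eqF.
Qed.
End Forms2.

Section Rayleigh.
Variables (R : realType) (V H : lmodType R) (ipV : V -> V -> R) (ipH : H -> H -> R).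
Hypotheses (hV : is_inner_product ipV) (hH : is_inner_product ipH) (hcV : ip_complete ipV).
Variable gamma : {linear V -> H}.
Hypothesis gcomp : op_compact ipV ipH gamma.
Variable Cg : R.
Hypothesis hg : forall x, ipH (gamma x) (gamma x) <= Cg * ipV x x.
Variable S : V -> Prop.
Hypothesis SL : forall a x y, S x -> S y -> S (a *: x + y).
Hypothesis Scl : forall s l, (forall n, S (s n)) -> cvgV ipV s l -> S l.

Let hbV := ip_bilsym hV.
Let hbH := ip_bilsym hH.

Lemma ipH_sym_sub (a b : H) : ipH (a - b) (a - b) = ipH (b - a) (b - a).
Proof. by rewrite -opprB (fN hbH) (fNr hbH) opprK. Qed.

Lemma rayleigh (m : V -> V -> R) (D : R) : bilsym m ->
  (forall x y, m x y ^+ 2 <= D * ipH (gamma x) (gamma x) * ipV y y) ->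
  (exists v, S v /\ m v v < 0) ->
  exists phi nu, [/\ S phi, phi <> 0, nu < 0 & forall y, S y -> m phi y = nu * ipV phi y].
Proof.
move=> hm hmb [v [Sv mv]].
have S0 : S 0 by have := SL (-1) Sv Sv; rewrite scaleN1r addNr.
have SD : forall x y, S x -> S y -> S (x + y) by move=> x y Sx Sy; have := SL 1 Sx Sy; rewrite scale1r.
have SZ : forall a x, S x -> S (a *: x) by move=> a x Sx; have := SL a Sx S0; rewrite addr0.
have SB : forall x y, S x -> S y -> S (x - y) by move=> x y Sx Sy; apply: SD => //; rewrite -scaleN1r; exact: SZ.
pose E := `|D| * `|Cg|.
have E0 : 0 <= E by rewrite mulr_ge0.
have hm2 : forall x y, m x y ^+ 2 <= E * ipV x x * ipV y y.
  move=> x y; have h1 := hmb x y; have h2 := hg x.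
  have h3 := ip_ge0 hH (gamma x); have h4 := ip_ge0 hV x; have h5 := ip_ge0 hV y.
  have h6 := ler_norm D; have h7 := ler_norm Cg; have h8 := normr_ge0 D; have h9 := normr_ge0 Cg.
  rewrite /E; move: h1 h2 h3 h4 h5 h6 h7 h8 h9.
  move: (m x y) (ipH (gamma x) (gamma x)) (ipV x x) (ipV y y) (`|D|) (`|Cg|) => a h X Y d c.
  move=> h1 h2 h3 h4 h5 h6 h7 h8 h9.
  have : D * h * Y <= d * h * Y by apply: ler_wpM2r => //; apply: ler_wpM2r.
  have : h * Y <= c * X * Y by apply: ler_wpM2r => //; apply: (le_trans h2); apply: ler_wpM2r.
  move=> hh1 hh2; apply: (le_trans h1); apply: (le_trans hh2).
  rewrite -!mulrA; apply: ler_wpM2l => //; by rewrite !mulrA.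
have mxx : forall x, - ((E + 1) * ipV x x) <= m x x <= (E + 1) * ipV x x.
  move=> x; have h1 := hm2 x x; have h2 := ip_ge0 hV x.
  move: h1 h2; move: (m x x) (ipV x x) => a X h1 h2.
  have h3 : a ^+ 2 <= ((E + 1) * X) ^+ 2 by apply: (le_trans h1); nra.
  rewrite -ler_norml; rewrite -(ler_pXn2r (_ : (0 < 2)%N)) ?nnegrE ?mulr_ge0 ?addr_ge0 //.
  by rewrite real_normK ?num_real.
pose T := fun x => S x /\ ipV x x = 1.
have vpos : 0 < ipV v v.
  rewrite lt_neqAle ip_ge0 // andbT; apply/negP => /eqP /esym /(ip_eq0 hV) v0.
  by move: mv; rewrite v0 (f0 hm) ltxx.
have [Tv1 mv1] := normalize hV hm vpos.
set v1 := _ *: v in Tv1 mv1.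
have Tb : forall x, T x -> - (E + 1) <= m x x.
  by move=> x [_ hx]; have := mxx x; rewrite hx mulr1 => /andP[].
have [nu [Hnu [s Hs]]] := approx_min (ex_intro T v1 (conj (SZ _ _ Sv) Tv1)) Tb.
have nu0 : nu < 0.
  apply: (le_lt_trans (Hnu v1 (conj (SZ _ _ Sv) Tv1))); rewrite mv1.
  by rewrite pmulr_llt0 ?invr_gt0.
pose Q := fun x y => m x y + (- nu) * ipV x y.
have hQ : bilsym Q := bilsym_comb (- nu) hm hbV.
have Qpos : forall x, S x -> 0 <= Q x x.
  move=> x Sx; have [x0|xpos] := eqVneq (ipV x x) 0.
    by rewrite (ip_eq0 hV x0) /Q (f0 hm) (f0 hbV) mulr0 addr0.
  have xp : 0 < ipV x x by rewrite lt_neqAle eq_sym xpos ip_ge0.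
  have [Tx mx] := normalize hV hm xp.
  have := Hnu _ (conj (SZ _ _ Sx) Tx); rewrite mx ler_pdivlMr // /Q => h.
  lra.
have [p [hp [l hl]]] : exists p : nat -> nat, (forall n, (p n < p n.+1)%N) /\
      exists l : H, forall e : R, 0 < e -> exists N : nat, forall n : nat,
        (N <= n)%N -> ipnorm ipH (gamma (s (p n)) - l) < e.
  apply: gcomp; exists 1 => n; rewrite /ipnorm (Hs n).1.2 sqrtr1 //.
pose z n := s (p n).
have Sz : forall n, S (z n) by move=> n; exact: (Hs (p n)).1.1.
have nz : forall n, ipV (z n) (z n) = 1 by move=> n; exact: (Hs (p n)).1.2.
have Qz : forall n, Q (z n) (z n) < n.+1%:R^-1.
  move=> n; have h1 := (Hs (p n)).2; have h2 := inv_mono R (incr_ge hp n).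
  rewrite /Q nz mulr1; move: h1 h2; rewrite -/(z n).
  move: (n.+1%:R^-1) ((p n).+1%:R^-1) => q1 q2; lra.
have cvH : cvgV ipH (fun n => gamma (z n)) l.
  move=> e e0; have se : 0 < Num.sqrt e by rewrite sqrtr_gt0.
  have [N HN] := hl _ se; exists N => n Nn; have := HN n Nn.
  by rewrite /ipnorm ltr_sqrt.
have cauchy : forall e : R, 0 < e -> exists N : nat, forall a b, (N <= a)%N -> (N <= b)%N ->
     ipV (z a - z b) (z a - z b) < e.
  move=> e e0.
  have [e' [e'def e'0]] : exists e' : R, e' = e * - nu /\ 0 < e'.
    by exists (e * - nu); split => //; rewrite mulr_gt0 // oppr_gt0.
  have e8 : 0 < e' / 8 by rewrite divr_gt0.
  have [N1 HN1] := archi_inv e8.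
  pose dl := e' ^+ 2 / (16 * (`|D| + 1)) / 4.
  have D1 : 0 < `|D| + 1 by rewrite ltr_pwDr.
  have dl0 : 0 < dl.
    by rewrite /dl divr_gt0 // divr_gt0 ?exprn_gt0 // mulr_gt0.
  have h6 : 4 * dl * (16 * (`|D| + 1)) = e' ^+ 2 by rewrite /dl; field; rewrite gt_eqF.
  clearbody dl.
  have [N2 HN2] := cvH _ dl0.
  exists (maxn N1 N2) => a b Na Nb.
  have Na1 : (N1 <= a)%N := leq_trans (leq_maxl _ _) Na.
  have Nb1 : (N1 <= b)%N := leq_trans (leq_maxl _ _) Nb.
  have Na2 : (N2 <= a)%N := leq_trans (leq_maxr _ _) Na.
  have Nb2 : (N2 <= b)%N := leq_trans (leq_maxr _ _) Nb.
  set d := z a - z b.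
  have f1 : Q d d <= 2 * Q (z a) (z a) + 2 * Q (z b) (z b).
    have := fpar hQ (z a) (z b); have := Qpos _ (SD _ _ (Sz a) (Sz b)). rewrite -/d. lra.
  have f2 : ipV d d <= 4.
    have := fpar hbV (z a) (z b); have := ip_ge0 hV (z a + z b); rewrite !nz -/d. lra.
  have f3 : ipH (gamma d) (gamma d) < 4 * dl.
    rewrite /d linearB /=.
    have := tri2 hH (gamma (z a)) (gamma (z b)) l; rewrite (ipH_sym_sub l).
    have := HN2 a Na2; have := HN2 b Nb2. lra.
  have f4 : m d d ^+ 2 < (e' / 2) ^+ 2.
    have h1 := hmb d d; have h2 := ip_ge0 hH (gamma d); have h3 := ip_ge0 hV d.
    have h4 := ler_norm D; have h5 := normr_ge0 D.
    move: h1 h2 h3 h4 h5 h6 f2 f3; move: (m d d) (ipH (gamma d) (gamma d)) (ipV d d) (`|D|) => x h X k.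
    move=> h1 h2 h3 h4 h5 h6 f2 f3.
    have : D * h * X <= k * h * 4.
      apply: (@le_trans _ _ (k * h * X)); first by apply: ler_wpM2r => //; apply: ler_wpM2r.
      by apply: ler_wpM2l => //; apply: mulr_ge0 => //; apply: (le_trans _ h4); rewrite normr_ge0.
    move=> h7; have h8 : k * h * 4 <= (k + 1) * h * 4 by nra.
    have h9 : (k + 1) * h * 4 < (k + 1) * (4 * dl) * 4.
      by rewrite ltr_pM2r // ltr_pM2l // ltr_pwDr.
    have -> : (e' / 2) ^+ 2 = e' ^+ 2 / 4 by field.
    rewrite -h6. lra.
  have f5 : - m d d < e' / 2.
    have := sq_lt (ltW (_ : 0 < e' / 2)) f4; rewrite divr_gt0 // => /(_ isT) /andP[h _].
    lra.
  have f6 : Q d d < e' / 2.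
    have := Qz a; have := Qz b; have := HN1 a Na1; have := HN1 b Nb1.
    move: (a.+1%:R^-1) (b.+1%:R^-1) => qa qb. lra.
  have f7 : (- nu) * ipV d d < e'.
    have : Q d d = m d d + (- nu) * ipV d d by [].
    lra.
  by move: f7; rewrite e'def mulrC ltr_pM2r // oppr_gt0.
have [phi hphi] := complete2 hcV cauchy.
have Sphi : S phi := Scl Sz hphi.
exists phi, nu; split => //.
  move=> phi0; have h2 : 0 < 2^-1 :> R by rewrite invr_gt0.
  have [N HN] := hphi _ h2; have := HN N (leqnn N).
  by rewrite phi0 subr0 nz; lra.
move=> y Sy.
suff : Q phi y = 0 by rewrite /Q; lra.
apply: (@quad0 _ _ (Q y y)); first exact: Qpos.
move=> t; apply: (@lim_pass _ (fun n => Q (z n) y)).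
  have hb : forall x, Q x y ^+ 2 <= ((2 * E + 2 * nu ^+ 2) * ipV y y) * ipV x x.
    move=> x; have h1 := hm2 x y; have h2 := ip_CS hV x y.
    have h3 := ip_ge0 hV x; have h4 := ip_ge0 hV y.
    rewrite /Q; move: h1 h2 h3 h4; move: (m x y) (ipV x y) (ipV x x) (ipV y y) => a b X Y.
    move=> h1 h2 h3 h4.
    have h5 := sqr_ge0 (a - (- nu) * b).
    have h6 : (a + - nu * b) ^+ 2 <= 2 * a ^+ 2 + 2 * (nu ^+ 2 * b ^+ 2) by nra.
    apply: (le_trans h6).
    have h7 : nu ^+ 2 * b ^+ 2 <= nu ^+ 2 * (X * Y) by apply: ler_wpM2l; rewrite ?sqr_ge0.
    nra.
  move=> e e0; have [dd dd0 Hdd] := form_small hV hb e0.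
  have [N HN] := hphi _ dd0; exists N => n Nn.
  by rewrite -(fB hQ); apply: Hdd; apply: HN.
move=> n; have h1 := Qpos _ (SD _ _ (Sz n) (SZ t _ Sy)).
rewrite (fexp hQ) in h1; have h2 := Qz n.
move: h1 h2; move: (n.+1%:R^-1) => q; lra.
Qed.
End Rayleigh.

Section Main.
Variables (R : realType) (V H : lmodType R) (ipV : V -> V -> R) (ipH : H -> H -> R).
Hypotheses (hVi : is_inner_product ipV) (hVc : ip_complete ipV) (hHi : is_inner_product ipH).
Variable gamma : {linear V -> H}.
Hypotheses (gcont : op_continuous ipV ipH gamma) (gcomp : op_compact ipV ipH gamma).

Let hbV := ip_bilsym hVi.
Let hbH := ip_bilsym hHi.

Definition bb x y := ipH (gamma x) (gamma y).

Lemma hbb : bilsym bb.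
Proof.
split=> [u v|a u v w]; first by rewrite /bb (fC hbH).
by rewrite /bb linearP (fD hbH) (fZ hbH).
Qed.

Lemma bb_ge0 x : 0 <= bb x x. Proof. exact: (ip_ge0 hHi). Qed.

Lemma gbound : exists Cg : R, 0 <= Cg /\ forall x, bb x x <= Cg * ipV x x.
Proof.
have [d [d0 hd]] := gcont 0 ltr01.
exists (4 / d ^+ 2); split; first by rewrite divr_ge0 // ?exprn_ge0 // ltW.
move=> x; have [x0|xpos] := eqVneq (ipV x x) 0.
  by rewrite (ip_eq0 hVi x0) /bb linear0 (f0 hbH) (f0 hbV) mulr0.
have xp : 0 < ipV x x by rewrite lt_neqAle eq_sym xpos ip_ge0.
have [Tx bx] := normalize hVi hbb xp.
set x' := _ *: x in Tx bx.
pose y := (d / 2) *: x'.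
have e1 : forall f : V -> V -> R, bilsym f -> f y y = (d / 2) ^+ 2 * f x' x'.
  by move=> f hf; rewrite /y (fZ hf) (fZr hf) mulrA expr2.
have d2 : 0 < d / 2 by rewrite divr_gt0.
have hy : ipnorm ipV (y - 0) < d.
  rewrite subr0 /ipnorm e1 // Tx mulr1 sqrtr_sqr ger0_norm ?ltW //; lra.
have := hd y hy; rewrite linear0 subr0 /ipnorm sqrt_lt // expr1n -/(bb y y) (e1 _ hbb) bx.
rewrite mulrA ltr_pdivrMr // mul1r => h.
rewrite -(@ler_pM2l _ ((d / 2) ^+ 2)) ?exprn_gt0 // mulrA.
have -> : (d / 2) ^+ 2 * (4 / d ^+ 2) = 1 by field; rewrite gt_eqF.
by rewrite mul1r ltW.
Qed.


Section WithK.
Variable Cg : R.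
Hypotheses (Cg0 : 0 <= Cg) (hCg : forall x, bb x x <= Cg * ipV x x).
Variable K : V -> V.
Hypothesis hK : forall x v, ipV (K x) v = bb x v.

Lemma K_lin a x y : K (a *: x + y) = a *: K x + K y.
Proof.
apply: (ip_ext hVi) => v; rewrite hK (fD hbV) (fZ hbV) !hK.
exact: hbb.2.
Qed.
Lemma KD x y : K (x + y) = K x + K y.
Proof. by have := K_lin 1 x y; rewrite !scale1r. Qed.
Lemma K0 : K 0 = 0.
Proof. by apply: (ip_ext hVi) => v; rewrite hK /bb linear0 (f0 hbH) (f0 hbV). Qed.
Lemma KZ a x : K (a *: x) = a *: K x.
Proof. by have := K_lin a x 0; rewrite !addr0 K0 addr0. Qed.
Lemma KN x : K (- x) = - K x.
Proof. by rewrite -scaleN1r KZ scaleN1r. Qed.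
Lemma KB x y : K (x - y) = K x - K y.
Proof. by rewrite KD KN. Qed.

Lemma Ksa x y : ipV (K x) y = ipV x (K y).
Proof. by rewrite hK (fC hbb) -hK (fC hbV). Qed.

Lemma ipZZ a u : ipV (a *: u) (a *: u) = a ^+ 2 * ipV u u.
Proof. by rewrite (fZ hbV) (fZr hbV) mulrA expr2. Qed.

Lemma ipDle (u v : V) : ipV (u + v) (u + v) <= 2 * ipV u u + 2 * ipV v v.
Proof. have := fpar hbV u v; have := ip_ge0 hVi (u - v); lra. Qed.

Lemma KK_bound x : ipV (K x) (K x) <= Cg ^+ 2 * ipV x x.
Proof.
have h1 := fCS hbb x (K x) bb_ge0.
rewrite -hK in h1.
have h2 := hCg x; have h3 := hCg (K x); have h4 := bb_ge0 x; have h5 := ip_ge0 hVi (K x).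
have h6 := ip_ge0 hVi x; have h9 := bb_ge0 (K x).
move: h1 h2 h3 h4 h5 h6 h9; move: (ipV (K x) (K x)) (bb x x) (bb (K x) (K x)) (ipV x x) => N a bK X.
move=> h1 h2 h3 h4 h5 h6 h9.
have h7 : a * bK <= (Cg * X) * (Cg * N) by apply: ler_pM.
have h8 : N ^+ 2 <= Cg ^+ 2 * X * N by apply: (le_trans h1); move: h7; rewrite expr2 -!mulrA (mulrCA X Cg).
have [N0|Np] := eqVneq N 0; first by rewrite N0; apply: mulr_ge0 => //; apply: sqr_ge0.
have Npos : 0 < N by rewrite lt_neqAle eq_sym Np h5.
by move: h8; rewrite expr2 ler_pM2r.
Qed.

Variables (c ls : R).
Definition L y := (1 - c) *: y - (2 * ls) *: K y + (ls ^+ 2) *: K (K y).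

Lemma L_lin a x y : L (a *: x + y) = a *: L x + L y.
Proof.
apply: (ip_ext hVi) => v; rewrite /L !K_lin.
do 4 rewrite ?(fD hbV) ?(fN hbV) ?(fZ hbV). ring.
Qed.

Lemma LK x : L (K x) = K (L x).
Proof. rewrite /L KD KB !KZ. reflexivity. Qed.

Lemma L_sa x y : ipV (L x) y = ipV x (L y).
Proof.
rewrite /L; do 4 rewrite ?(fD hbV) ?(fN hbV) ?(fZ hbV).
do 4 rewrite ?(fDr hbV) ?(fNr hbV) ?(fZr hbV).
by rewrite !Ksa.
Qed.

Lemma L_bound : exists EL : R, 0 <= EL /\ forall y, ipV (L y) (L y) <= EL * ipV y y.
Proof.
exists (4 * (1 - c) ^+ 2 + 4 * (2 * ls) ^+ 2 * Cg ^+ 2 + 2 * (ls ^+ 2) ^+ 2 * (Cg ^+ 2) ^+ 2).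
split.
  have := sqr_ge0 (1 - c); have := sqr_ge0 (2 * ls); have := sqr_ge0 (ls ^+ 2).
  have := sqr_ge0 Cg; have := sqr_ge0 (Cg ^+ 2).
  move: ((1 - c) ^+ 2) ((2 * ls) ^+ 2) ((ls ^+ 2) ^+ 2) (Cg ^+ 2) ((Cg ^+ 2) ^+ 2) => a b d e f.
  move=> *; nra.
move=> y; rewrite /L.
have h1 := ipDle ((1 - c) *: y - (2 * ls) *: K y) (ls ^+ 2 *: K (K y)).
have h2 := ipDle ((1 - c) *: y) (- ((2 * ls) *: K y)).
rewrite (fN hbV) (fNr hbV) opprK !ipZZ in h2.
rewrite !ipZZ in h1.
have h3 := KK_bound y; have h4 := KK_bound (K y).
have h5 : ipV (K (K y)) (K (K y)) <= (Cg ^+ 2) ^+ 2 * ipV y y.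
  apply: (le_trans h4); rewrite [(Cg ^+ 2) ^+ 2]expr2 -mulrA; apply: ler_wpM2l => //; exact: sqr_ge0.
have h6 := ip_ge0 hVi y; have h7 := ip_ge0 hVi (K y); have h8 := ip_ge0 hVi (K (K y)).
have e3 : 0 <= (2 * ls) ^+ 2 := sqr_ge0 _.
have e4 : 0 <= (ls ^+ 2) ^+ 2 := sqr_ge0 _.
have h9 : (2 * ls) ^+ 2 * ipV (K y) (K y) <= (2 * ls) ^+ 2 * (Cg ^+ 2 * ipV y y) by apply: ler_wpM2l.
have h10 : (ls ^+ 2) ^+ 2 * ipV (K (K y)) (K (K y)) <= (ls ^+ 2) ^+ 2 * ((Cg ^+ 2) ^+ 2 * ipV y y) by apply: ler_wpM2l.
move: h1 h2 h9 h10.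
move: (ipV _ _) (ipV (_ - _) _) (ipV (K y) (K y)) (ipV (K (K y)) (K (K y))) (ipV y y) => A B C D Y.
move: ((1 - c) ^+ 2) ((2 * ls) ^+ 2) ((ls ^+ 2) ^+ 2) (Cg ^+ 2) ((Cg ^+ 2) ^+ 2) => a b d e f.
move=> h1 h2 h9 h10; lra.
Qed.

Lemma scale_eq0 (a : R) (x : V) : a *: x = 0 -> x <> 0 -> a = 0.
Proof.
move=> h x0; apply/eqP; apply/negP => /negP a0; apply: x0.
by rewrite -[x]scale1r -(mulVf a0) -scalerA h scaler0.
Qed.

Lemma L0 : L 0 = 0.
Proof. by rewrite /L K0 K0 !scaler0 subrr addr0. Qed.

Lemma LZ a x : L (a *: x) = a *: L x.
Proof. by have := L_lin a x 0; rewrite !addr0 L0 addr0. Qed.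

Lemma LKlin a x y : L (K (a *: x + y)) = a *: L (K x) + L (K y).
Proof. by rewrite K_lin L_lin. Qed.

Lemma LKB x y : L (K (x - y)) = L (K x) - L (K y).
Proof.
have -> : x - y = (-1) *: y + x by rewrite scaleN1r addrC.
by rewrite LKlin scaleN1r addrC.
Qed.

Variable EL : R.
Hypotheses (EL0 : 0 <= EL) (hEL : forall y, ipV (L y) (L y) <= EL * ipV y y).

Definition mf x y := bb x (L y).

Lemma mf_K x y : mf x y = ipV (L (K x)) y.
Proof. by rewrite /mf -hK L_sa. Qed.

Lemma hmf : bilsym mf.
Proof.
split=> [x y|a x y z]; last by rewrite /mf; exact: hbb.2.
by rewrite !mf_K [LHS]L_sa Ksa -LK (fC hbV).
Qed.

Lemma mf_bound x y : mf x y ^+ 2 <= (Cg * EL) * ipH (gamma x) (gamma x) * ipV y y.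
Proof.
have h1 := fCS hbb x (L y) bb_ge0; rewrite /mf.
have h2 := hCg (L y); have h3 := hEL y; have h4 := bb_ge0 x; have h5 := bb_ge0 (L y).
have h6 := ip_ge0 hVi y.
have h7 : bb (L y) (L y) <= Cg * EL * ipV y y.
  by apply: (le_trans h2); rewrite -mulrA; apply: ler_wpM2l.
apply: (le_trans h1); rewrite -/(bb x x).
have -> : Cg * EL * bb x x * ipV y y = bb x x * (Cg * EL * ipV y y) by ring.
by apply: ler_wpM2l.
Qed.

Lemma LK_bound x : ipV (L (K x)) (L (K x)) <= EL * Cg ^+ 2 * ipV x x.
Proof.
apply: (le_trans (hEL (K x))); rewrite -mulrA; apply: ler_wpM2l => //.
exact: KK_bound.
Qed.


Lemma eig_in (S : V -> Prop) : (forall a x y, S x -> S y -> S (a *: x + y)) ->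
  (forall s l, (forall n, S (s n)) -> cvgV ipV s l -> S l) -> (forall x, S x -> S (K x)) ->
  forall v, S v -> 0 < bb v v ->
  exists psi k, [/\ S psi, psi <> 0, 0 < k & K psi = k *: psi].
Proof.
move=> SL Scl SK v Sv bv.
have hnb : bilsym (fun x y => - bb x y).
  split=> [x y|a x y z]; first by rewrite (fC hbb).
  rewrite hbb.2; ring.
have hnbb : forall x y, (- bb x y) ^+ 2 <= Cg * ipH (gamma x) (gamma x) * ipV y y.
  move=> x y; rewrite sqrrN; apply: (le_trans (fCS hbb x y bb_ge0)).
  rewrite -/(bb x x) -mulrA mulrCA; apply: ler_wpM2l; first exact: bb_ge0.
  exact: hCg.
have hex : exists v, S v /\ - bb v v < 0 by exists v; split => //; rewrite oppr_lt0.
have [psi [nu [Spsi psi0 nu0 hpsi]]] := rayleigh hVi hHi hVc gcomp hCg SL Scl hnb hnbb hex.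
pose r := nu *: psi + K psi.
have Sr : S r := SL nu psi (K psi) Spsi (SK _ Spsi).
have hr : forall y, S y -> ipV r y = 0.
  move=> y Sy; rewrite /r (fD hbV) (fZ hbV) hK -(hpsi y Sy); ring.
have r0 : r = 0 by apply: (ip_eq0 hVi); exact: hr.
exists psi, (- nu); split => //; first by rewrite oppr_gt0.
by move/eqP: r0; rewrite /r addrC addr_eq0 => /eqP ->; rewrite scaleNr.
Qed.

Lemma conclude (ll cc : R) phi k : phi <> 0 -> k != 0 -> K phi = k *: phi ->
  (1 - ll * k) ^+ 2 <= cc ->
  exists lam, is_eigenvalue ipV ipH gamma lam /\ `|(lam - ll) / lam| <= Num.sqrt cc.
Proof.
move=> phi0 k0 hphi hb; exists k^-1; split.
  exists phi; split => // v.
  have h : bb phi v = k * ipV phi v by rewrite -hK hphi (fZ hbV).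
  by rewrite -/(bb phi v) h mulrA mulVf // mul1r.
have -> : (k^-1 - ll) / k^-1 = 1 - ll * k by field.
by rewrite -sqrtr_sqr; exact: ler_wsqrtr.
Qed.

Lemma caseA : (exists v, mf v v < 0) ->
  exists phi k, [/\ phi <> 0, k != 0, K phi = k *: phi & (1 - ls * k) ^+ 2 <= c].
Proof.
move=> [v mv].
have [phi [nu [_ phi0 nu0 hphi]]] := rayleigh hVi hHi hVc gcomp hCg (S := fun _ => True)
  (fun _ _ _ _ _ => I) (fun _ _ _ _ => I) hmf mf_bound (ex_intro _ v (conj I mv)).
have hLK : L (K phi) = nu *: phi.
  by apply: (ip_ext hVi) => y; rewrite -mf_K hphi // (fZ hbV).
pose E := fun x => L (K x) = nu *: x.
have SL : forall a x y, E x -> E y -> E (a *: x + y).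
  move=> a x y; rewrite /E LKlin => -> ->.
  by rewrite scalerDr !scalerA (mulrC a nu).
have Scl : forall s l, (forall n, E (s n)) -> cvgV ipV s l -> E l.
  move=> s l hs hl; rewrite /E; apply/eqP; rewrite -subr_eq0; apply/eqP.
  apply: (ip_eq0 hVi); apply/eqP; rewrite eq_le ip_ge0 // andbT.
  apply: le_eps => e e0; rewrite add0r.
  pose G := 2 * (EL * Cg ^+ 2) + 2 * nu ^+ 2 + 1.
  have G0 : 0 < G.
    have g1 : 0 <= EL * Cg ^+ 2 by rewrite mulr_ge0 // sqr_ge0.
    have g2 := sqr_ge0 nu; rewrite /G; move: g1 g2; move: (EL * Cg ^+ 2) (nu ^+ 2) => g1 g2; lra.
  have [N HN] := hl (e / G) (divr_gt0 e0 G0).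
  have hN := HN N (leqnn N).
  have -> : L (K l) - nu *: l = L (K (l - s N)) - nu *: (l - s N).
    by rewrite LKB (hs N) scalerBr opprB addrA subrK.
  set d := l - s N.
  have hd : ipV d d * G < e by rewrite -ltr_pdivlMr // /d (fsym_sub hbV).
  have h1 := ipDle (L (K d)) (- (nu *: d)); rewrite (fN hbV) (fNr hbV) opprK ipZZ in h1.
  have h2 := LK_bound d.
  have h3 := ip_ge0 hVi d.
  move: h1 h2 h3 hd; rewrite /G.
  move: (ipV (_ - _) _) (ipV (L (K d)) (L (K d))) (ipV d d) (EL * Cg ^+ 2) (nu ^+ 2) => X A D p q.
  move=> h1 h2 h3 hd; nra.
have hbphi : 0 < bb phi phi.
  rewrite lt_neqAle bb_ge0 andbT eq_sym; apply/negP => /eqP b0.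
  have g0 := ip_eq0 hHi b0.
  have K0phi : K phi = 0.
    by apply: (ip_ext hVi) => y; rewrite hK /bb g0 (f0 hbH) (f0 hbV).
  move: hLK; rewrite K0phi L0 => /esym h.
  have nz := scale_eq0 h phi0; by move: nu0; rewrite nz ltxx.
have SK : forall x, E x -> E (K x).
  by move=> x; rewrite /E => hx; rewrite LK hx KZ.
have [psi [k [Epsi psi0 k0 hpsi]]] := eig_in SL Scl SK hLK hbphi.
pose q := (1 - c) - 2 * ls * k + ls ^+ 2 * k ^+ 2.
have hLpsi : L psi = q *: psi.
  rewrite /L hpsi KZ hpsi !scalerA -!scalerBl -scalerDl /q; congr (_ *: _); ring.
have h : (k * q - nu) *: psi = 0.
  rewrite scalerBl -scalerA -hLpsi -LZ -hpsi; rewrite /E in Epsi; rewrite Epsi subrr //.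
have kq : k * q = nu.
  by apply/eqP; rewrite -subr_eq0; apply/eqP; exact: scale_eq0 h psi0.
exists psi, k; split => //; first by rewrite gt_eqF.
have hq : q < 0.
  by rewrite -(pmulr_rlt0 _ k0) kq.
have -> : (1 - ls * k) ^+ 2 = q + c by rewrite /q; ring.
lra.
Qed.


Lemma caseB (u : V) : (forall v, 0 <= mf v v) -> mf u u = 0 -> 0 < bb u u -> ls != 0 -> 0 <= c ->
  exists phi k, [/\ phi <> 0, k != 0, K phi = k *: phi & (1 - ls * k) ^+ 2 <= c].
Proof.
move=> hpos hu bu ls0 c0.
have hmu : forall y, mf u y = 0.
  move=> y; have := fCS hmf u y hpos; rewrite hu mul0r => h.
  by apply/eqP; rewrite -sqrf_eq0 eq_le h sqr_ge0.
have hLz : L (K u) = 0 by apply: (ip_ext hVi) => y; rewrite -mf_K hmu (f0 hbV).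
set z := K u in hLz.
have z0 : z <> 0.
  move=> z0; have : ipV z u = bb u u by rewrite hK.
  by rewrite z0 (f0 hbV) => h; move: bu; rewrite -h ltxx.
pose sc := Num.sqrt c.
have hsc : sc ^+ 2 = c by rewrite sqr_sqrtr.
have sc0 : 0 <= sc := sqrtr_ge0 c.
pose r1 := (1 + sc) / ls.
pose r2 := (1 - sc) / ls.
pose y := K z - r2 *: z.
have hy : K y = r1 *: y.
  apply/eqP; rewrite -subr_eq0; apply/eqP.
  have -> : K y - r1 *: y = (ls ^+ 2)^-1 *: L z.
    apply: (ip_ext hVi) => v; rewrite /y /L KB KZ.
    do 5 rewrite ?(fD hbV) ?(fN hbV) ?(fZ hbV).
    by rewrite /r1 /r2 -hsc; field.
  by rewrite hLz scaler0.
have [y0|yn0] := eqVneq y 0.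
  have hz : K z = r2 *: z by apply/eqP; rewrite -subr_eq0; apply/eqP.
  have r20 : r2 != 0.
    apply/negP => /eqP r20; apply: z0; apply: (ip_eq0 hVi).
    by rewrite {1}/z Ksa hz r20 scale0r (f0r hbV).
  exists z, r2; split => //.
  have -> : 1 - ls * r2 = sc by rewrite /r2; field.
  by rewrite hsc.
exists y, r1; split => //; first exact/eqP.
  rewrite /r1 mulf_eq0 negb_or invr_eq0 ls0 andbT.
  by rewrite gt_eqF // ltr_pwDl.
have -> : 1 - ls * r1 = - sc by rewrite /r1; field.
by rewrite sqrrN hsc.
Qed.

End WithK.
End Main.

Unset Implicit Arguments.

Theorem theorem3p3 (R : realType) (V H : lmodType R)
    (ipV : V -> V -> R) (ipH : H -> H -> R)
    (hV : is_hilbert ipV) (hH : is_hilbert ipH)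
    (gamma : {linear V -> H})
    (gcont : op_continuous ipV ipH gamma)
    (gcomp : op_compact ipV ipH gamma)
    (ustar : V) (lamstar : R) (w : V)
    (hw : forall v : V, ipV w v = ipV ustar v - lamstar * ipH (gamma ustar) (gamma v))
    (hgu : gamma ustar <> 0) :
  exists lam : R, is_eigenvalue ipV ipH gamma lam /\
    `|(lam - lamstar) / lam| <= ipnorm ipH (gamma w) / ipnorm ipH (gamma ustar).
Proof.
case: hV => hVi hVc; case: hH => hHi _.
have hbV := ip_bilsym hVi.
have hb := hbb hHi gamma.
have [Cg [Cg0 hCg]] := gbound hVi hHi gcont.
have hK0 : forall x, exists k, forall v, ipV k v = bb ipH gamma x v.
  move=> x; apply: (riesz hVi (F := bb ipH gamma x) _ (C := bb ipH gamma x x * Cg) hVc).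
    by move=> a u v; rewrite (fDr hb) (fZr hb).
  move=> v; have h1 := fCS hb x v (fun z => ip_ge0 hHi (gamma z)).
  apply: (le_trans h1); rewrite -mulrA; apply: ler_wpM2l; first exact: (ip_ge0 hHi).
  exact: hCg.
pose K := fun x => proj1_sig (constructive_indefinite_description _ (hK0 x)).
have hK : forall x v, ipV (K x) v = bb ipH gamma x v.
  by move=> x v; rewrite /K; case: (constructive_indefinite_description _ _) => k hk /=.
have hwK : w = ustar - lamstar *: K ustar.
  by apply: (ip_ext hVi) => v; rewrite hw (fB hbV) (fZ hbV) hK.
have bu : 0 < bb ipH gamma ustar ustar.
  have h0 := ip_ge0 hHi (gamma ustar); rewrite lt_neqAle /bb h0 andbT eq_sym; apply/negP => /eqP /(ip_eq0 hHi); exact: hgu.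
pose c := bb ipH gamma w w / bb ipH gamma ustar ustar.
have hw0 : 0 <= bb ipH gamma w w := ip_ge0 hHi (gamma w).
have c0 : 0 <= c by rewrite divr_ge0 // ltW.
have hratio : ipnorm ipH (gamma w) / ipnorm ipH (gamma ustar) = Num.sqrt c.
  by rewrite /ipnorm /c sqrtrM ?(ip_ge0 hHi) // sqrtrV // ltW.
rewrite hratio.
suff [phi [k [phi0 k0 hphi hk]]] : exists phi k,
    [/\ phi <> 0, k != 0, K phi = k *: phi & (1 - lamstar * k) ^+ 2 <= c].
  exact: (conclude hVi hK phi0 k0 hphi hk).
have [ls0|ls0] := eqVneq lamstar 0.
  have [psi [k [_ psi0 kp hpsi]]] := eig_in hVi hVc hHi gcomp hCg hK (S := fun _ => True)
    (fun _ _ _ _ _ => I) (fun _ _ _ _ => I) (fun _ _ => I) I bu.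
  exists psi, k; split => //; first by rewrite gt_eqF.
  rewrite ls0 mul0r subr0 expr1n /c hwK ls0 scale0r subr0 divff //.
  by rewrite gt_eqF.
have [EL [EL0 hEL]] := L_bound hVi hHi hCg hK c lamstar.
have hmu : mf ipH gamma K c lamstar ustar ustar = 0.
  have e1 : bb ipH gamma (K ustar) (K ustar) = bb ipH gamma ustar (K (K ustar)).
    by rewrite -!hK (fC hbV).
  have ec : c * bb ipH gamma ustar ustar = bb ipH gamma w w.
    by rewrite /c divfK // gt_eqF.
  rewrite hwK in ec.
  move: ec; rewrite (fB hb) !(fBr hb) !(fZ hb) !(fZr hb) (fC hb (K ustar) ustar) e1 => ec.
  rewrite /mf /L (fDr hb) (fBr hb) !(fZr hb).
  move: ec; move: (bb ipH gamma ustar ustar) (bb ipH gamma ustar (K ustar))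
    (bb ipH gamma ustar (K (K ustar))) => A B C ec.
  lra.
have [hex|hnex] := classic (exists v, mf ipH gamma K c lamstar v v < 0).
  exact: (caseA hVi hVc hHi gcomp Cg0 hCg hK EL0 hEL hex).
apply: (caseB hVi hHi hK (u := ustar)) => //.
by move=> v; rewrite leNgt; apply/negP => h; apply: hnex; exists v.
Qed.
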